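(* Fix a constant $B\ge 1$. An ideal SABT for $n$ keys with total number of accesses $m$ can be built in $O(\min(n\log n, m))$ time, uses $O(n)$ memory, and has depth $O(\log_B m)$.
   Context: A Generic Self-Adjusting Tree (GSAT) with degree function $D$ for a set of integer keys with access counts $ac_i\ge1$ consists of $m=\sum_i ac_i$, an array of $k\le\lceil D(m)\rceil$ representative keys with their access counts, and $k+1$ child subtrees that are GSATs for the keys lying strictly before the first representative, strictly between consecutive representatives, and strictly after the last; every node stores at least one key. $m(T')$ is the total access count of keys in subtree $T'$. A GSAT is ideal if each child $T_j$ of the root satisfies $m(T_j)\le m/(D(m)+1)$ and each child is ideal. An SABT (Self-Adjusting B-Tree) is a GSAT with constant degree function $D(m)=B$. Cost model for construction: given keys sorted with prefix sums of access counts, a node costs $O(B)$ time and memory plus $O(\log n)$ time per representative (each representative chosen by binary search on prefix sums), besides recursive construction of its children. *)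

(* Defs.v *)
From mathcomp Require Import all_boot all_order all_algebra.
Set Implicit Arguments. Unset Strict Implicit. Unset Printing Implicit Defensive.
Import Order.TTheory GRing.Theory Num.Theory.

(* A key together with its access count. *)
Definition entry := (int * nat)%type.

(* Generic Self-Adjusting Trees.  [GLeaf] is the empty subtree (a child
   whose key range is empty); every [GNode] stores at least one key. *)
Inductive gsat := GLeaf | GNode of seq entry & seq gsat.

Definition acc_total (S : seq entry) : nat := sumn (map snd S).

Definition ltkey (p q : entry) : bool := (p.1 < q.1)%R.

Definition between (lo hi : option int) (x : int) : bool :=
  (if lo is Some a then (a < x)%R else true) &&
  (if hi is Some b then (x < b)%R else true).

(* keys of S lying in the j-th gap determined by the representatives:
   j = 0 : strictly before the first representative,
   0 < j < k : strictly between representatives j-1 and j,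
   j = k : strictly after the last one. *)
Definition gap_keys (S reps : seq entry) (j : nat) : seq entry :=
  let ks := map fst reps in
  let lo := if j is j'.+1 then Some (nth 0%R ks j') else None in
  let hi := if j < size ks then Some (nth 0%R ks j) else None in
  filter (fun p => between lo hi p.1) S.

Fixpoint is_gsat (D : nat -> nat) (T : gsat) (S : seq entry) {struct T} : Prop :=
  match T with
  | GLeaf => S = [::]
  | GNode reps ch =>
      [/\ 0 < size reps,
          size reps <= D (acc_total S),
          sorted ltkey reps,
          all (fun r => r \in S) reps &
          size ch = (size reps).+1] /\
          (fix aux (cs : seq gsat) (j : nat) {struct cs} : Prop :=
             match cs with
             | [::] => True
             | c :: cs' => is_gsat D c (gap_keys S reps j) /\ aux cs' j.+1
             end) ch 0
  end.

Definition is_sabt (B : nat) (T : gsat) (S : seq entry) : Prop :=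
  is_gsat (fun _ => B) T S.

Fixpoint mass (T : gsat) : nat :=
  match T with
  | GLeaf => 0
  | GNode reps ch => acc_total reps + sumn (map mass ch)
  end.

Fixpoint nkeys (T : gsat) : nat :=
  match T with
  | GLeaf => 0
  | GNode reps ch => size reps + sumn (map nkeys ch)
  end.

Fixpoint ideal (D : nat -> nat) (T : gsat) {struct T} : Prop :=
  match T with
  | GLeaf => True
  | GNode reps ch =>
      (fix aux (cs : seq gsat) {struct cs} : Prop :=
         match cs with
         | [::] => True
         | c :: cs' => mass c * (D (mass T)).+1 <= mass T /\ ideal D c /\ aux cs'
         end) ch
  end.

Fixpoint depth (T : gsat) : nat :=
  match T with
  | GLeaf => 0
  | GNode _ ch => (foldr maxn 0 (map depth ch)).+1
  end.

(* Construction cost model: a node costs O(B) time plus one binary search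
   over the (sorted, prefix-summed) key range of its subtree per
   representative, i.e. (1 + log2 (#keys in range)) <= O(log n) time each. *)
Fixpoint build_time (B : nat) (T : gsat) : nat :=
  match T with
  | GLeaf => 0
  | GNode reps ch =>
      B + size reps * (trunc_log 2 (nkeys T)).+1 + sumn (map (build_time B) ch)
  end.

(* Memory: O(B) per node (B key/count slots and B+1 child pointers). *)
Fixpoint build_mem (B : nat) (T : gsat) : nat :=
  match T with
  | GLeaf => 0
  | GNode reps ch => B + B.+1 + sumn (map (build_mem B) ch)
  end.

(* Main.v *)
Require Import Defs.
From mathcomp Require Import all_boot all_order all_algebra.
From mathcomp Require Import zify.
Import Order.TTheory GRing.Theory Num.Theory.


Fixpoint grd (M B cur : nat) (S : seq entry) : seq entry * seq (entry * seq entry) :=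
  match S with
  | [::] => ([::], [::])
  | p :: S' =>
     if (cur + p.2) * B.+1 <= M then
        let r := grd M B (cur + p.2) S' in (p :: r.1, r.2)
     else
        let r := grd M B 0 S' in ([::], (p, r.1) :: r.2)
  end.

Definition flat (bs : seq (entry * seq entry)) : seq entry :=
  flatten (map (fun b => b.1 :: b.2) bs).

Lemma acc_cat s t : acc_total (s ++ t) = acc_total s + acc_total t.
Proof. by rewrite /acc_total map_cat sumn_cat. Qed.

Lemma acc_cons p s : acc_total (p :: s) = p.2 + acc_total s.
Proof. by []. Qed.

Lemma grd_cat M B cur S : let r := grd M B cur S in S = r.1 ++ flat r.2.
Proof.
elim: S cur => [|p S IH] cur //=.
case: ifP => _ /=; first by rewrite [S in LHS](IH (cur + p.2)).
by rewrite [S in LHS](IH 0).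
Qed.

Lemma grd_gap0 M B cur S : cur * B.+1 <= M ->
  (cur + acc_total (grd M B cur S).1) * B.+1 <= M.
Proof.
elim: S cur => [|p S IH] cur /=; first by rewrite addn0.
case: ifP => H /= Hc; last by rewrite addn0.
rewrite acc_cons addnA; exact: IH.
Qed.

Lemma grd_gaps M B cur S : cur * B.+1 <= M ->
  all (fun b => acc_total b.2 * B.+1 <= M) (grd M B cur S).2.
Proof.
elim: S cur => [|p S IH] cur //= Hc.
case: ifP => H /=; first exact: IH.
apply/andP; split; last exact: IH.
by have := grd_gap0 M B 0 S (leq0n _).
Qed.

Lemma grd_count M B cur S :
  size (grd M B cur S).2 * M.+1 <= B.+1 * (cur + acc_total S).
Proof.
elim: S cur => [|p S IH] cur /=; first by [].
case: ifP => H /=.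
  by rewrite acc_cons addnA; apply: IH.
have := IH 0; rewrite add0n acc_cons => H2.
move/negbT: H; rewrite -ltnNge => H.
rewrite mulSn; nia.
Qed.


Lemma ltkey_trans : transitive ltkey.
Proof. move=> y x z; rewrite /ltkey; exact: lt_trans. Qed.

Lemma filter_none (T : Type) (a : pred T) s : all (fun x => ~~ a x) s -> filter a s = [::].
Proof. by elim: s => //= x s IH /andP[/negbTE -> /IH]. Qed.

Lemma filter_allT (T : Type) (a : pred T) s : all a s -> filter a s = s.
Proof. by move/all_filterP. Qed.

Lemma gap0 g0 bs : pairwise ltkey (g0 ++ flat bs) ->
  gap_keys (g0 ++ flat bs) (map fst bs) 0 = g0.
Proof.
rewrite /gap_keys; case: bs => [|[p g] bs] /=.
  by rewrite cats0 => _; apply: filter_allT; apply/allP.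
rewrite pairwise_cat => /and3P[Hr _ Hp].
rewrite filter_cat filter_allT; last first.
  apply/allP => x Hx /=; move/allrelP: Hr => /(_ x p Hx); rewrite mem_head => /(_ isT).
  by [].
rewrite filter_none ?cats0 //=.
move: Hp; rewrite /= => /andP[Hp _].
rewrite /between /= ltxx /=; apply/allP => x Hx /=.
move/allP: Hp => /(_ x Hx); rewrite /ltkey => H.
by rewrite ltNge (ltW H).
Qed.


Lemma gapS g0 p T rs j : pairwise ltkey (g0 ++ p :: T) -> all (fun r => r \in T) rs ->
  j <= size rs ->
  gap_keys (g0 ++ p :: T) (p :: rs) j.+1 = gap_keys T rs j.
Proof.
rewrite pairwise_cat => /and3P[Hr _ Hp] Hrs Hj.
move: Hp => /= /andP[Hp _].
have HT : forall x, x \in T -> (p.1 < x.1)%R.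
  by move=> x Hx; move/allP: Hp => /(_ x Hx).
have Hlo : (p.1 <= nth 0%R (map fst (p :: rs)) j)%R.
  case: j Hj => [|j] Hj //=.
  have Hin : nth p rs j \in T by move/allP: Hrs; apply; rewrite mem_nth.
  rewrite (nth_map p) //; exact: ltW (HT _ Hin).
rewrite /gap_keys filter_cat filter_none; last first.
  apply/allP => x Hx /=; apply/negP => /andP[H1 _].
  move/allrelP: Hr => /(_ x p Hx (mem_head _ _)); rewrite /ltkey => H2.
  have := lt_le_trans H2 Hlo => H3.
  by have := lt_trans H1 H3; rewrite ltxx.
rewrite cat0s /= {1}/between.
have -> : (nth 0%R (map fst (p :: rs)) j < p.1)%R = false.
  by apply/negbTE; rewrite -leNgt.
rewrite /=; apply: eq_in_filter => x Hx.
case: j Hj Hlo => [|j] Hj Hlo /=; last by [].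
by rewrite /between /= HT.
Qed.


Lemma reps_in bs : all (fun r => r \in flat bs) (map fst bs).
Proof.
elim: bs => [|[p g] bs IH] //=; rewrite mem_head /=.
apply/allP => x Hx; move/allP: IH => /(_ x Hx) H.
by rewrite inE mem_cat H !orbT.
Qed.

Lemma gap_nth g0 bs j : pairwise ltkey (g0 ++ flat bs) -> j <= size bs ->
  gap_keys (g0 ++ flat bs) (map fst bs) j = nth [::] (g0 :: map snd bs) j.
Proof.
elim: bs g0 j => [|[p g] bs IH] g0 j Hs Hj.
  by move: Hj; rewrite leqn0 => /eqP ->; apply: gap0.
case: j Hj => [|j] Hj; first exact: gap0.
rewrite /= -/(flat bs) (gapS g0 p (g ++ flat bs)) //.
- rewrite IH //. move: Hs; rewrite /= -/(flat bs) pairwise_cat => /and3P[_ _ /=].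
  by case/andP.
- apply/allP => x Hx; move/allP: (reps_in bs) => /(_ x Hx) H.
  by rewrite mem_cat H orbT.
- by rewrite size_map.
Qed.

Lemma reps_sub g0 bs : subseq (map fst bs) (g0 ++ flat bs).
Proof.
elim: bs g0 => [|[p g] bs IH] g0 /=; first exact: sub0seq.
rewrite -/(flat bs).
apply: (@subseq_trans _ (p :: flat bs)).
  by rewrite -cat1s -[p :: flat bs]cat1s subseq_cat2l; exact: (IH [::]).
apply: (@subseq_trans _ (p :: g ++ flat bs)).
  rewrite -cat1s -[p :: g ++ _]cat1s subseq_cat2l; exact: suffix_subseq.
exact: suffix_subseq.
Qed.

Lemma gaps_sub g0 bs g : g \in g0 :: map snd bs -> subseq g (g0 ++ flat bs).
Proof.
elim: bs g0 => [|[p g'] bs IH] g0 /=.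
  by rewrite inE => /eqP ->; rewrite cats0.
rewrite -/(flat bs) !inE => /orP[/eqP ->|/orP[/eqP ->|H]].
- exact: prefix_subseq.
- apply: (@subseq_trans _ (p :: g' ++ flat bs)); last exact: suffix_subseq.
  apply: (@subseq_trans _ (g' ++ flat bs)); last exact: subseq_cons.
  exact: prefix_subseq.
- apply: (@subseq_trans _ (g' ++ flat bs)).
    by apply: IH; rewrite inE H orbT.
  apply: (@subseq_trans _ (p :: g' ++ flat bs)); last exact: suffix_subseq.
  exact: subseq_cons.
Qed.

Lemma acc_split g0 bs : acc_total (g0 ++ flat bs) =
  acc_total (map fst bs) + sumn (map acc_total (g0 :: map snd bs)).
Proof.
elim: bs g0 => [|[p g] bs IH] g0 /=; first by rewrite cats0 addn0.
rewrite -/(flat bs) acc_cat acc_cons IH /= /acc_total /=; lia.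
Qed.

Lemma size_split g0 bs : size (g0 ++ flat bs) =
  size (map fst bs) + sumn (map size (g0 :: map snd bs)).
Proof.
elim: bs g0 => [|[p g] bs IH] g0 /=; first by rewrite cats0 addn0.
rewrite -/(flat bs) size_cat /= IH /=; lia.
Qed.


Lemma sumn_map_le (T : Type) (s : seq T) f g :
  (forall x, List.In x s -> f x <= g x) -> sumn (map f s) <= sumn (map g s).
Proof.
elim: s => //= x s IH H; apply: leq_add; first by apply: H; left.
by apply: IH => y Hy; apply: H; right.
Qed.

Lemma sumn_map_mul (T : Type) (s : seq T) c f :
  sumn (map (fun x => c * f x) s) = c * sumn (map f s).
Proof. elim: s => [|x s IH] /=; [by rewrite muln0 | by rewrite IH mulnDr]. Qed.

Lemma sumn_map_add (T : Type) (s : seq T) f g :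
  sumn (map (fun x => f x + g x) s) = sumn (map f s) + sumn (map g s).
Proof. elim: s => //= x s ->; lia. Qed.

Lemma leq_sumn_in (T : Type) (s : seq T) f x : List.In x s -> f x <= sumn (map f s).
Proof.
elim: s => //= y s IH [->|H]; first exact: leq_addr.
by apply: leq_trans (IH H) _; apply: leq_addl.
Qed.

Lemma foldr_maxn_le (T : Type) (s : seq T) f c :
  (forall x, List.In x s -> f x <= c) -> foldr maxn 0 (map f s) <= c.
Proof.
elim: s => //= x s IH H; rewrite geq_max H /=; last by left.
by apply: IH => y Hy; apply: H; right.
Qed.

Lemma acc_ge_size s : all (fun p => 0 < p.2) s -> size s <= acc_total s.
Proof. elim: s => //= p s IH /andP[H1 H2]; rewrite acc_cons; have := IH H2; lia. Qed.

Lemma all_sub (s t : seq entry) (a : pred entry) : subseq t s -> all a s -> all a t.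
Proof. move=> /mem_subseq Hs /allP H; apply/allP => x /Hs; exact: H. Qed.

Lemma core_log x M : 0 < x -> 2 * x <= M ->
  2 * x * trunc_log 2 M <= M * (trunc_log 2 x + 2).
Proof.
move=> Hx HM.
have HM0 : 0 < M by lia.
set k := trunc_log 2 x; set j := trunc_log 2 M.
have Hxk : x < 2 ^ k.+1 by apply: trunc_log_ltn.
have HMj : 2 ^ j <= M by apply: trunc_logP.
case: (leqP j (k + 2)) => Hjk; first by nia.
have [e He] : exists e, j = k + 2 + e by exists (j - (k + 2)); lia.
have HQ : e < 2 ^ e by apply: ltn_expl.
have HP : 2 ^ j = 2 ^ (k + 2) * 2 ^ e by rewrite He expnD.
have HP2 : 2 * x < 2 ^ (k + 2) by rewrite addn2 expnS; lia.
move: HP HP2 HQ HMj; rewrite He.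
move: (2 ^ (k + 2)) (2 ^ e) => P Q HP HP2 HQ HMj.
rewrite HP in HMj.
have h1 : 2 * x * (k + 2 + e) <= P * (k + 2 + e) by apply: leq_mul; lia.
have h2 : P * (k + 2 + e) <= P * Q * (k + 2) by rewrite -mulnA leq_mul2l; nia.
have h3 : P * Q * (k + 2) <= M * (k + 2) by apply: leq_mul.
lia.
Qed.

Definition G (B x : nat) := if x is 0 then 0 else B * (trunc_log 2 x + 2).

Lemma child_G B x M : 1 <= B -> x * B.+1 <= M ->
  2 * B * trunc_log 2 M * x <= M * G B x.
Proof.
move=> hB Hx; case: x Hx => [|x] Hx; first by rewrite muln0 muln0.
rewrite /G.
have H2 : 2 * x.+1 <= M by nia.
have := core_log x.+1 M (ltn0Sn x) H2.
nia.
Qed.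


Fixpoint build (B fuel : nat) (S : seq entry) : gsat :=
  match fuel with
  | 0 => GLeaf
  | f.+1 => if S is [::] then GLeaf else
      let d := grd (acc_total S) B 0 S in
      GNode (map fst d.2) (map (build B f) (d.1 :: map snd d.2))
  end.

Lemma aux_gsat D S reps cs j0 :
  (forall i, i < size cs -> is_gsat D (nth GLeaf cs i) (gap_keys S reps (j0 + i))) ->
  (fix aux (cs : seq gsat) (j : nat) {struct cs} : Prop :=
             match cs with
             | [::] => True
             | c :: cs' => is_gsat D c (gap_keys S reps j) /\ aux cs' j.+1
             end) cs j0.
Proof.
elim: cs j0 => //= c cs IH j0 H; split.
  by have := H 0 isT; rewrite addn0.
apply: IH => i Hi; have := H i.+1 Hi; by rewrite addnS.
Qed.

Lemma aux_ideal D X cs :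
  (forall c, List.In c cs -> mass c * (D X).+1 <= X /\ ideal D c) ->
  (fix aux (cs : seq gsat) {struct cs} : Prop :=
         match cs with
         | [::] => True
         | c :: cs' => mass c * (D X).+1 <= X /\ ideal D c /\ aux cs'
         end) cs.
Proof.
elim: cs => //= c cs IH H; have [H1 H2] := H c (or_introl erefl).
by split=> //; split=> //; apply: IH => c' Hc'; apply: H; right.
Qed.

Lemma test_ideal B reps ch :
  (forall c, List.In c ch -> mass c * B.+1 <= mass (GNode reps ch) /\ ideal (fun _ => B) c) ->
  ideal (fun _ => B) (GNode reps ch).
Proof. move=> H. exact: (@aux_ideal (fun _ => B) (mass (GNode reps ch)) ch H). Qed.

Lemma test_gsat B reps ch S :
  [/\ 0 < size reps, size reps <= B, sorted ltkey reps, all (fun r => r \in S) reps &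
          size ch = (size reps).+1] ->
  (forall i, i < size ch -> is_gsat (fun _ => B) (nth GLeaf ch i) (gap_keys S reps i)) ->
  is_sabt B (GNode reps ch) S.
Proof. move=> H1 H2; split; first exact: H1. by apply: aux_gsat. Qed.


Lemma In_mem (T : eqType) (x : T) s : List.In x s -> x \in s.
Proof. elim: s => //= y s IH [->|H]; first exact: mem_head. by rewrite inE IH ?orbT. Qed.

Lemma build_eq B f S : S != [::] ->
  build B f.+1 S = GNode (map fst (grd (acc_total S) B 0 S).2)
     (map (build B f) ((grd (acc_total S) B 0 S).1 :: map snd (grd (acc_total S) B 0 S).2)).
Proof. by case: S. Qed.

Lemma mapmap (A B C : Type) (h : B -> C) (k : A -> B) s :
  map h (map k s) = map (fun x => h (k x)) s.
Proof. by elim: s => //= x s ->. Qed.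

Lemma In_map_inv (A C : Type) (h : A -> C) s c :
  List.In c (map h s) -> exists2 x, List.In x s & c = h x.
Proof.
elim: s => //= x s IH [<-|H]; first by exists x; [left|].
by case: (IH H) => y Hy ->; exists y; [right|].
Qed.

Lemma G_pos B x : 0 < x -> G B x = B * (trunc_log 2 x + 2).
Proof. by case: x. Qed.

Lemma log_le x : 0 < x -> trunc_log 2 x <= x.
Proof.
move=> Hx; have H1 := trunc_logP (isT : 1 < 2) Hx.
have H2 := ltn_expl (trunc_log 2 x) (isT : 1 < 2); lia.
Qed.

Lemma mem_In (T : eqType) (x : T) s : x \in s -> List.In x s.
Proof. elim: s => //= y s IH; rewrite inE => /orP[/eqP ->|H]; [by left|right; exact: IH]. Qed.

Lemma build_nil B f : build B f [::] = GLeaf.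
Proof. by case: f. Qed.

Definition Pfacts B S T :=
  [/\ is_sabt B T S, ideal (fun _ => B) T, mass T = acc_total S, nkeys T = size S &
      build_time B T + G B (acc_total S) <= 6 * B * acc_total S] /\
  [/\ forall N, size S <= N -> build_time B T <= B * size S * (trunc_log 2 N + 2),
      build_mem B T <= (2 * B).+1 * size S &
      depth T <= (if S is [::] then 0 else (trunc_log B.+1 (acc_total S)).+1)].

Lemma Pleaf B : Pfacts B [::] GLeaf.
Proof. by split; split. Qed.

Lemma main_build B (hB : 1 <= B) fuel : forall S, size S <= fuel -> sorted ltkey S ->
  all (fun p => 0 < p.2) S -> Pfacts B S (build B fuel S).
Proof.
elim: fuel => [|f IH] S HS Hsort Hpos.
  by move: HS; rewrite leqn0 size_eq0 => /eqP ->; exact: Pleaf.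
case: S HS Hsort Hpos => [|x S'] HS Hsort Hpos; first by rewrite build_nil; exact: Pleaf.
have HM : 0 < acc_total (x :: S') by move: Hpos => /= /andP[H _]; rewrite acc_cons; lia.
rewrite build_eq //.
have Hdp : forall T, depth T <= (trunc_log B.+1 (acc_total (x::S'))).+1 ->
  depth T <= (if x :: S' is [::] then 0 else (trunc_log B.+1 (acc_total (x::S'))).+1) by [].
rewrite /Pfacts.
move: HS Hsort Hpos HM Hdp; move: (x :: S') => S; clear x S' => HS Hsort Hpos HM Hdp.
move HMdef: (acc_total S) => M; rewrite HMdef in HM Hdp.
have ES : S = (grd M B 0 S).1 ++ flat (grd M B 0 S).2 := grd_cat M B 0 S.
have Hg0 := grd_gap0 M B 0 S (leq0n _); rewrite add0n in Hg0.
have Hgs := grd_gaps M B 0 S (leq0n _).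
have Hcnt := grd_count M B 0 S; rewrite add0n HMdef in Hcnt.
set g0 := (grd M B 0 S).1 in ES Hg0 Hgs Hcnt *.
set bs := (grd M B 0 S).2 in ES Hg0 Hgs Hcnt *.
clearbody g0 bs.
set reps := map fst bs.
set gaps := g0 :: map snd bs.
set ch := map (build B f) gaps.
have Hpw : pairwise ltkey S by rewrite -sorted_pairwise //; exact: ltkey_trans.
have HaccS : acc_total S = acc_total reps + sumn (map acc_total gaps) by rewrite ES acc_split.
have HsizeS : size S = size reps + sumn (map size gaps) by rewrite ES size_split.
have Hk1 : 0 < size bs.
  rewrite lt0n size_eq0; apply/negP => /eqP E.
  move: ES; rewrite E /= cats0 => ES.
  rewrite -ES HMdef in Hg0; nia.
have HkB : size bs <= B by nia.
have Hsr : size reps = size bs by rewrite size_map.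
have Hgap : forall g, g \in gaps ->
   [/\ size g <= f, sorted ltkey g, all (fun p => 0 < p.2) g & acc_total g * B.+1 <= M].
  move=> g Hg.
  have Hsub : subseq g S by rewrite [S in subseq _ S]ES; exact: gaps_sub.
  split.
  - have : size g <= sumn (map size gaps).
      elim: (gaps) Hg => //= h t IHt; rewrite inE => /orP[/eqP ->|H].
        exact: leq_addr.
      by apply: leq_trans (IHt H) _; apply: leq_addl.
    lia.
  - exact: (@subseq_sorted _ ltkey ltkey_trans _ _ Hsub Hsort).
  - exact: all_sub Hsub Hpos.
  - move: Hg; rewrite inE => /orP[/eqP ->|] //.
    by move/mapP => [b Hb ->]; move/allP: Hgs => /(_ b Hb).
have IHg : forall g, g \in gaps -> Pfacts B g (build B f g).
  by move=> g /Hgap [H1 H2 H3 _]; apply: IH.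
have HsubR : subseq reps S by rewrite [S in subseq _ S]ES; exact: reps_sub.
have Hrpos : all (fun p => 0 < p.2) reps by exact: all_sub HsubR Hpos.
have Hr1 : size reps <= acc_total reps by exact: acc_ge_size.
have Hmch : sumn (map mass ch) = sumn (map acc_total gaps).
  rewrite /ch mapmap; congr sumn; apply/eq_in_map => g Hg /=.
  by case: (IHg g Hg) => [[_ _ -> _ _] _].
have Hnch : sumn (map nkeys ch) = sumn (map size gaps).
  rewrite /ch mapmap; congr sumn; apply/eq_in_map => g Hg /=.
  by case: (IHg g Hg) => [[_ _ _ -> _] _].
have Hmass : mass (GNode reps ch) = M.
  have -> : mass (GNode reps ch) = acc_total reps + sumn (map mass ch) by [].
  by rewrite Hmch -HaccS.
have Hnk : nkeys (GNode reps ch) = size S.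
  have -> : nkeys (GNode reps ch) = size reps + sumn (map nkeys ch) by [].
  by rewrite Hnch -HsizeS.
have HinCh : forall c, List.In c ch -> exists2 g, g \in gaps & c = build B f g.
  move=> c Hc0; have [g Hg Hc] := @In_map_inv _ _ _ _ _ Hc0; exists g; [exact: In_mem | by rewrite Hc].
have HsM : size S <= M by rewrite -HMdef; exact: acc_ge_size.
have HLs : trunc_log 2 (size S) <= trunc_log 2 M by exact: leq_trunc_log.
have Hbt : build_time B (GNode reps ch) = B + size reps * (trunc_log 2 (nkeys (GNode reps ch))).+1
   + sumn (map (build_time B) ch) by [].
split; split.
- apply: test_gsat.
  + split.
    * by rewrite Hsr.
    * by rewrite Hsr.
    * exact: (@subseq_sorted _ ltkey ltkey_trans _ _ HsubR Hsort).
    * apply/allP => r Hr; exact: (mem_subseq HsubR).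
    * by rewrite /ch /gaps /reps /= !size_map.
  + move=> i Hi.
    have Hi' : i <= size bs by move: Hi; rewrite /ch size_map /gaps /= size_map.
    rewrite /ch (nth_map [::]) //; last by rewrite size_map in Hi.
    have -> : gap_keys S reps i = nth [::] gaps i by rewrite ES /reps gap_nth // -ES.
    have Hin : nth [::] gaps i \in gaps by rewrite mem_nth // /gaps /= size_map.
    by case: (IHg _ Hin) => [[]].
- apply: test_ideal => c /HinCh [g Hg ->]; rewrite Hmass.
  case: (IHg g Hg) => [[_ Hid -> _ _] _]; split => //.
  by case/Hgap: Hg.
- exact: Hmass.
- exact: Hnk.
- rewrite Hbt Hnk.
  set r := acc_total reps. set X := sumn (map acc_total gaps).
  have HMrX : M = r + X by rewrite -HMdef HaccS.
  rewrite G_pos //.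
  set LM := trunc_log 2 M.
  set SB := sumn (map (build_time B) ch).
  set R := sumn (map (fun g => G B (acc_total g)) gaps).
  have Hsum : SB + R <= 6 * B * X.
    rewrite /SB /R /ch mapmap -sumn_map_add /X -sumn_map_mul.
    apply: sumn_map_le => g /In_mem Hg.
    by case: (IHg g Hg) => [[_ _ _ _ H] _].
  have HMR : 2 * B * LM * X <= M * R.
    rewrite /R /X -!sumn_map_mul.
    apply: sumn_map_le => g /In_mem Hg.
    apply: child_G => //; by case/Hgap: Hg.
  have HLM : LM <= M by exact: log_le.
  have Hr : 1 <= r by rewrite /r; lia.
  have Hk : size reps <= B by rewrite Hsr.
  have Hkey : 2 * B * (LM + 2) <= 6 * B * r + R.
    have : M * (2 * B * (LM + 2)) <= M * (6 * B * r + R).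
      have h1 : B * M <= B * r * M by nia.
      have h2 : B * LM * r <= B * M * r by nia.
      rewrite HMrX in HMR h1 h2 HLM *. nia.
    by rewrite leq_pmul2l.
  have Hc : size reps * (trunc_log 2 (size S)).+1 <= B * (LM + 1).
    apply: leq_mul => //; lia.
  lia.
- move=> N HN; rewrite Hbt Hnk.
  set LN := trunc_log 2 N.
  have HsN : trunc_log 2 (size S) <= LN by exact: leq_trunc_log.
  have Hsum : sumn (map (build_time B) ch) <= B * (LN + 2) * sumn (map size gaps).
    rewrite /ch mapmap -sumn_map_mul; apply: sumn_map_le => g Hg.
    have Hsg : size g <= size S by rewrite HsizeS; have := @leq_sumn_in _ _ size _ Hg; lia.
    case: (IHg g (@In_mem _ _ _ Hg)) => [_ [H _ _]]; have := H N ltac:(lia); nia.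
  move: HsN Hsum; set Ls := trunc_log 2 (size S) => HsN Hsum.
  rewrite HsizeS Hsr.
  have h1 : size bs * Ls.+1 <= B * (LN + 1) by apply: leq_mul => //; lia.
  have h2 : B * (LN + 2) <= B * size bs * (LN + 2) by nia.
  nia.
- have -> : build_mem B (GNode reps ch) = B + B.+1 + sumn (map (build_mem B) ch) by [].
  have Hsum : sumn (map (build_mem B) ch) <= (2 * B).+1 * sumn (map size gaps).
    rewrite /ch mapmap -sumn_map_mul; apply: sumn_map_le => g Hg.
    by case: (IHg g (@In_mem _ _ _ Hg)) => [_ [_ H _]].
  rewrite HsizeS Hsr; nia.
- have -> : depth (GNode reps ch) = (foldr maxn 0 (map depth ch)).+1 by [].
  rewrite ltnS; apply: foldr_maxn_le => c /HinCh [g Hg ->].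
  case: (IHg g Hg) => [_ [_ _ Hd]].
  case: (Hgap g Hg) => [_ _ Hpg Hbd].
  move: Hd Hpg Hbd; clear Hg; case: g => [|y g'] Hd Hpg Hbd; first by move: Hd; rewrite leqn0 => /eqP ->.
  apply: (leq_trans Hd).
  have Ha : 0 < acc_total (y :: g') by have := acc_ge_size _ Hpg; rewrite /=; lia.
  apply: trunc_log_max => //.
  rewrite expnSr; apply: leq_trans Hbd; rewrite leq_mul2r; apply/orP; right.
  exact: trunc_logP.
Qed.


Theorem theorem7 (B : nat) (hB : 1 <= B) :
  exists C : nat, forall S : seq entry,
    sorted ltkey S -> all (fun p => 0 < p.2) S ->
    let n := size S in
    let m := acc_total S in
    exists T : gsat,
      [/\ is_sabt B T S,
          ideal (fun _ => B) T,
          build_time B T <= C * minn (n * trunc_log 2 n) m + C,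
          build_mem B T <= C * n + C &
          depth T <= C * trunc_log B.+1 m + C].
Proof.
exists (6 * B).+1 => S Hsort Hpos; cbv zeta.
exists (build B (size S) S).
have [[H1 H2 H3 H4 H5] [H6 H7 H8]] := main_build B hB (size S) S (leqnn _) Hsort Hpos.
have Hbm : build_time B (build B (size S) S) <= 6 * B * acc_total S by lia.
have Hbn := H6 (size S) (leqnn _).
split => //.
- case: (leqP (size S) 1) => Hn.
    have E : trunc_log 2 (size S) = 0.
      by case: (size S) Hn => [|[|]].
    rewrite E muln0 min0n in Hbn *; nia.
  have HL : 0 < trunc_log 2 (size S) by rewrite trunc_log_gt0 /= Hn.
  case: (leqP (size S * trunc_log 2 (size S)) (acc_total S)) => Hc.
    nia.
  nia.
- nia.
- move: H8; case: (S) => [|y s] H8; first by move: H8; rewrite leqn0 => /eqP ->.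
  apply: (leq_trans H8); nia.
Qed.
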